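(* Let $g\in\mathbb{C}[\alpha,x^{\pm}]^s$ and assume $\mathcal{A}$ and $\mathcal{X}$ satisfy one of: (i) $\mathcal{A}\subseteq\mathbb{R}^\ell$ and $\mathcal{X}\subseteq(\mathbb{R}^* )^n$ are both semialgebraic; (ii) $\mathcal{A}\subseteq\mathbb{C}^\ell$ and $\mathcal{X}\subseteq(\mathbb{C}^* )^n$ are both constructible; (iii) $\mathcal{A}\subseteq\mathbb{R}^\ell$ is semialgebraic and $\mathcal{X}\subseteq(\mathbb{C}^* )^n$ is constructible. Assume additionally that $\mathcal{A}$ is locally Zariski dense in $\mathbb{C}^\ell$. Then $\mathcal{D}_{g,\mathcal{A}}(\mathcal{X})$ is Zariski dense in $\mathbb{C}^\ell$ if and only if it has nonempty Euclidean interior in $\mathcal{A}$.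
   Context: Let $g\in\mathbb{C}[\alpha_1,\dots,\alpha_\ell,x_1^{\pm1},\dots,x_n^{\pm1}]^s$, $g_\alpha=g(\alpha,\cdot)$, $\mathbb{V}_{\mathbb{C}^*}(g_\alpha)=\{x\in(\mathbb{C}^* )^n: g_\alpha(x)=0\}$. For $\mathcal{A}\subseteq\mathbb{C}^\ell$, $\mathcal{X}\subseteq(\mathbb{C}^* )^n$, $\mathcal{D}_{g,\mathcal{A}}(\mathcal{X})=\{\alpha\in\mathcal{A}:\mathbb{V}_{\mathbb{C}^*}(g_\alpha)\cap\mathcal{X}\neq\emptyset\}$. A set $X\subseteq\mathbb{C}^m$ is locally Zariski dense if for every Euclidean open $U\subseteq\mathbb{C}^m$ with $U\cap X\neq\emptyset$, the Zariski closure of $U\cap X$ is $\mathbb{C}^m$. A subset $S$ has nonempty Euclidean interior in $\mathcal{A}$ if there is an open Euclidean ball $B$ with $\emptyset\ne B\cap\mathcal{A}\subseteq S$. *)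

(* Defs.v *)
From HB Require Import structures.
From mathcomp Require Import all_boot all_algebra.
From mathcomp Require Import mpoly.
From mathcomp Require Import reals.
From mathcomp Require Import complex.

Set Implicit Arguments.
Unset Strict Implicit.
Unset Printing Implicit Defensive.

Import GRing.Theory Num.Theory.
Local Open Scope ring_scope.

Section Defs.
Variable R : realType.

Local Notation C := (R[i]).

Definition realpt (m : nat) (y : 'I_m -> R) : 'I_m -> C :=
  fun i => ((y i)%:C)%C.

Definition in_torus (m : nat) (x : 'I_m -> C) : Prop := forall i, x i != 0.

(* Semialgebraic subsets of R^m: boolean combinations of sets {p > 0},
   p a real polynomial (the set {p = 0} is the complement of
   {p > 0} U {-p > 0}). *)
Inductive semialgebraic (m : nat) : (('I_m -> R) -> Prop) -> Prop :=
| sa_pos (p : {mpoly R[m]}) : semialgebraic (fun y => 0 < p.@[y])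
| sa_union S T : semialgebraic S -> semialgebraic T ->
    semialgebraic (fun y => S y \/ T y)
| sa_compl S : semialgebraic S -> semialgebraic (fun y => ~ S y)
| sa_ext S T : (forall y, S y <-> T y) -> semialgebraic S -> semialgebraic T.

Inductive constructible (m : nat) : (('I_m -> C) -> Prop) -> Prop :=
| co_zero (p : {mpoly C[m]}) : constructible (fun x => p.@[x] = 0)
| co_union S T : constructible S -> constructible T ->
    constructible (fun x => S x \/ T x)
| co_compl S : constructible S -> constructible (fun x => ~ S x)
| co_ext S T : (forall x, S x <-> T x) -> constructible S -> constructible T.

Definition real_semialgebraic (m : nat) (A : ('I_m -> C) -> Prop) : Prop :=
  exists S : ('I_m -> R) -> Prop, semialgebraic S /\
    forall x, A x <-> exists y, S y /\ x = realpt y.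

Definition real_torus_semialgebraic (m : nat) (X : ('I_m -> C) -> Prop) :=
  real_semialgebraic X /\ forall x, X x -> in_torus x.

Definition torus_constructible (m : nat) (X : ('I_m -> C) -> Prop) :=
  constructible X /\ forall x, X x -> in_torus x.

(* Open Euclidean ball in C^m (radius r > 0 assumed where used). *)
Definition eball (m : nat) (c : 'I_m -> C) (r : R) : ('I_m -> C) -> Prop :=
  fun x => \sum_(i < m) `|x i - c i| ^+ 2 < ((r ^+ 2)%:C)%C.

Definition eopen (m : nat) (U : ('I_m -> C) -> Prop) : Prop :=
  forall x, U x -> exists r : R, 0 < r /\ forall y, eball x r y -> U y.

Definition zariski_closure (m : nat) (X : ('I_m -> C) -> Prop)
  : ('I_m -> C) -> Prop :=
  fun x => forall S : {mpoly C[m]} -> Prop,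
    (forall p, S p -> forall y, X y -> p.@[y] = 0) ->
    forall p, S p -> p.@[x] = 0.

Definition zariski_dense (m : nat) (X : ('I_m -> C) -> Prop) : Prop :=
  forall x, zariski_closure X x.

Definition locally_zariski_dense (m : nat) (X : ('I_m -> C) -> Prop) :=
  forall U : ('I_m -> C) -> Prop, eopen U -> (exists x, U x /\ X x) ->
    zariski_dense (fun x => U x /\ X x).

Definition nonempty_interior_in (m : nat) (A S : ('I_m -> C) -> Prop) :=
  exists (c : 'I_m -> C) (r : R), 0 < r /\
    (exists x, eball c r x /\ A x) /\
    (forall x, eball c r x -> A x -> S x).

(* Elements of C[alpha_1..alpha_l, x_1^{+-1}..x_n^{+-1}], represented as
   q(alpha, x) / x^e with q a polynomial in l + n variables. *)
Record laurent (l n : nat) := Laurent {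
  lnum : {mpoly C[l + n]};
  lden : 'I_n -> nat }.

Definition joinpt (l n : nat) (a : 'I_l -> C) (x : 'I_n -> C)
  : 'I_(l + n) -> C :=
  fun i => match split i with inl j => a j | inr j => x j end.

Definition leval (l n : nat) (f : laurent l n) (a : 'I_l -> C)
  (x : 'I_n -> C) : C :=
  (lnum f).@[joinpt a x] / \prod_(i < n) x i ^+ lden f i.

Definition torus_zeros (l n s : nat) (g : 'I_s -> laurent l n)
  (a : 'I_l -> C) : ('I_n -> C) -> Prop :=
  fun x => in_torus x /\ forall j, leval (g j) a x = 0.

Definition discr_set (l n s : nat) (g : 'I_s -> laurent l n)
  (A : ('I_l -> C) -> Prop) (X : ('I_n -> C) -> Prop)
  : ('I_l -> C) -> Prop :=
  fun a => A a /\ exists x, torus_zeros g a x /\ X x.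

End Defs.

(* Main.v *)
Require Import Defs.
From HB Require Import structures.
From mathcomp Require Import all_boot all_order all_algebra all_field.
From mathcomp Require Import mpoly.
From mathcomp Require Import reals.
From mathcomp Require Import complex ordered_qelim qe_rcf.
From mathcomp Require Import lra.
From Stdlib Require Import FunctionalExtensionality Classical.
Import Order.TTheory GRing.Theory Num.Theory.
Local Open Scope ring_scope.
Set Implicit Arguments.
Unset Strict Implicit.
Unset Printing Implicit Defensive.

Section Cont.
Variables (F : numFieldType) (m : nat).

Definition cont_at (f : ('I_m -> F) -> F) (y : 'I_m -> F) :=
  forall e, 0 < e -> exists2 d, 0 < d &
    forall z, (forall i, `|z i - y i| < d) -> `|f z - f y| < e.

Lemma cont_cst c y : cont_at (fun _ => c) y.
Proof. by move=> e e0; exists 1 => // z _; rewrite subrr normr0. Qed.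

Lemma cont_var i y : cont_at (fun z => z i) y.
Proof. by move=> e e0; exists e => // z /(_ i). Qed.

Lemma pos_min (d1 d2 : F) : 0 < d1 -> 0 < d2 ->
  exists d, [/\ 0 < d, d <= d1 & d <= d2].
Proof.
move=> h1 h2; have : d1 >=< d2 by rewrite real_comparable ?gtr0_real.
case/comparable_leP => h.
  by exists d1; rewrite h1 lexx h.
by exists d2; rewrite h2 lexx (ltW h).
Qed.

Lemma cont_add f g y : cont_at f y -> cont_at g y -> cont_at (fun z => f z + g z) y.
Proof.
move=> cf cg e e0.
have e20 : 0 < e / 2 by rewrite divr_gt0 ?ltr0n.
have [d1 d10 H1] := cf _ e20; have [d2 d20 H2] := cg _ e20.
have [d [d0 dd1 dd2]] := pos_min d10 d20.
exists d => // z Hz.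
have hz1 : forall i, `|z i - y i| < d1 by move=> i; exact: lt_le_trans (Hz i) dd1.
have hz2 : forall i, `|z i - y i| < d2 by move=> i; exact: lt_le_trans (Hz i) dd2.
rewrite (_ : f z + g z - (f y + g y) = (f z - f y) + (g z - g y)); last first.
  by rewrite opprD addrACA.
apply: (le_lt_trans (ler_normD _ _)).
by rewrite [e]splitr ltrD ?H1 ?H2.
Qed.

Lemma cont_opp f y : cont_at f y -> cont_at (fun z => - f z) y.
Proof.
move=> cf e e0; have [d d0 H] := cf _ e0; exists d => // z Hz.
by rewrite -opprD normrN H.
Qed.

Lemma cont_mul f g y : cont_at f y -> cont_at g y -> cont_at (fun z => f z * g z) y.
Proof.
move=> cf cg e e0.
set a := `|g y| + 1; set b := `|f y| + 1.
have a0 : 0 < a by rewrite ltr_pwDr ?ltr01 ?normr_ge0.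
have b0 : 0 < b by rewrite ltr_pwDr ?ltr01 ?normr_ge0.
have e1 : 0 < e / 2 / a by rewrite !divr_gt0 ?ltr0n.
have e2 : 0 < e / 2 / b by rewrite !divr_gt0 ?ltr0n.
have [d' [d'0 d'e d'1]] := pos_min e2 ltr01.
have [d1 d10 H1] := cf _ e1; have [d2 d20 H2] := cg _ d'0.
have [d [d0 dd1 dd2]] := pos_min d10 d20.
exists d => // z Hz.
have hz1 : forall i, `|z i - y i| < d1 by move=> i; exact: lt_le_trans (Hz i) dd1.
have hz2 : forall i, `|z i - y i| < d2 by move=> i; exact: lt_le_trans (Hz i) dd2.
have Hf := H1 _ hz1; have Hg := H2 _ hz2.
rewrite (_ : f z * g z - f y * g y = (f z - f y) * g z + f y * (g z - g y)); last first.
  by rewrite mulrBl mulrBr addrA subrK.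
apply: (le_lt_trans (ler_normD _ _)); rewrite [e]splitr; apply: ltrD.
  have ga : `|g z| <= a.
    rewrite -[g z](subrK (g y)) (le_trans (ler_normD _ _)) //.
    by rewrite addrC lerD2l ltW // (lt_le_trans Hg d'1).
  rewrite normrM; apply: (@le_lt_trans _ _ (`|f z - f y| * a)).
    by rewrite ler_wpM2l ?normr_ge0.
  by rewrite -ltr_pdivlMr.
rewrite normrM; apply: (@le_lt_trans _ _ (b * `|g z - g y|)).
  by rewrite ler_wpM2r ?normr_ge0 // lerDl ler01.
rewrite -ltr_pdivlMl // (lt_le_trans Hg) // mulrC.
exact: d'e.
Qed.

Lemma cont_ext f g y : (forall z, f z = g z) -> cont_at f y -> cont_at g y.
Proof. by move=> fg cf e e0; have [d d0 H] := cf e e0; exists d => // z /H; rewrite !fg. Qed.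

Lemma cont_sum (I : Type) (r : seq I) (P : pred I) (f : I -> ('I_m -> F) -> F) y :
  (forall i, cont_at (f i) y) -> cont_at (fun z => \sum_(i <- r | P i) f i z) y.
Proof.
move=> cf; elim: r => [|i r IH].
  by apply: (cont_ext (f := fun _ => 0)); [move=> z; rewrite big_nil|apply: cont_cst].
case Pi: (P i).
  apply: (cont_ext (f := fun z => f i z + \sum_(i <- r | P i) f i z)).
    by move=> z; rewrite big_cons Pi.
  exact: cont_add.
by apply: (cont_ext (f := fun z => \sum_(i <- r | P i) f i z)) => // z; rewrite big_cons Pi.
Qed.

Lemma cont_prod (I : Type) (r : seq I) (P : pred I) (f : I -> ('I_m -> F) -> F) y :
  (forall i, cont_at (f i) y) -> cont_at (fun z => \prod_(i <- r | P i) f i z) y.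
Proof.
move=> cf; elim: r => [|i r IH].
  by apply: (cont_ext (f := fun _ => 1)); [move=> z; rewrite big_nil|apply: cont_cst].
case Pi: (P i).
  apply: (cont_ext (f := fun z => f i z * \prod_(i <- r | P i) f i z)).
    by move=> z; rewrite big_cons Pi.
  exact: cont_mul.
by apply: (cont_ext (f := fun z => \prod_(i <- r | P i) f i z)) => // z; rewrite big_cons Pi.
Qed.

Lemma cont_exp f n y : cont_at f y -> cont_at (fun z => f z ^+ n) y.
Proof.
move=> cf; elim: n => [|n IH].
  by apply: (cont_ext (f := fun _ => 1)); [move=> z; rewrite expr0|apply: cont_cst].
apply: (cont_ext (f := fun z => f z * f z ^+ n)); first by move=> z; rewrite exprS.
exact: cont_mul.
Qed.

Lemma cont_meval (p : {mpoly F[m]}) y : cont_at (fun z => p.@[z]) y.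
Proof.
apply: (cont_ext (f := fun z => \sum_(k <- msupp p) p@_k * \prod_i z i ^+ k i)).
  by move=> z; rewrite mevalE.
apply: cont_sum => k; apply: cont_mul; first exact: cont_cst.
by apply: cont_prod => i; apply: cont_exp; apply: cont_var.
Qed.

Lemma meval_nz_near (p : {mpoly F[m]}) y : p.@[y] != 0 ->
  exists2 d, 0 < d & forall z, (forall i, `|z i - y i| < d) -> p.@[z] != 0.
Proof.
move=> py; have := normr_gt0 (p.@[y]); rewrite py => /(cont_meval p y) [d d0 H].
exists d => // z /H; apply: contraTneq => ->.
by rewrite sub0r normrN ltxx.
Qed.
End Cont.

Section Line.
Variables (F : numFieldType) (m : nat).

Definition line (a b : 'I_m -> F) (t : F) : 'I_m -> F := fun i => a i + (b i - a i) * t.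

Definition lpoly (p : {mpoly F[m]}) a b : {poly F} :=
  \sum_(k <- msupp p) p@_k *: \prod_i ((a i)%:P + (b i - a i) *: 'X) ^+ k i.

Lemma lpolyE p a b t : (lpoly p a b).[t] = p.@[line a b t].
Proof.
rewrite mevalE /lpoly horner_sum; apply: eq_bigr => k _.
rewrite hornerZ horner_prod; congr (_ * _); apply: eq_bigr => i _.
by rewrite horner_exp hornerD hornerC hornerZ hornerX.
Qed.

Lemma line0 a b : line a b 0 = a.
Proof. by apply: functional_extensionality_dep => i; rewrite /line mulr0 addr0. Qed.

Lemma line1 a b : line a b 1 = b.
Proof. by apply: functional_extensionality_dep => i; rewrite /line mulr1 addrC subrK. Qed.

Lemma line_nz p q a b : p.@[a] != 0 -> q.@[b] != 0 ->
  exists k : nat, p.@[line a b k%:R] * q.@[line a b k%:R] != 0.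
Proof.
move=> pa qb.
have P0 : lpoly p a b != 0.
  by apply: contraNneq pa => h; rewrite -(line0 a b) -lpolyE h horner0.
have Q0 : lpoly q a b != 0.
  by apply: contraNneq qb => h; rewrite -(line1 a b) -lpolyE h horner0.
have PQ0 : lpoly p a b * lpoly q a b != 0 by rewrite mulf_neq0.
apply: NNPP => hno.
set s := [seq (k%:R : F) | k <- iota 0 (size (lpoly p a b * lpoly q a b))].
have := @max_poly_roots _ _ s PQ0.
rewrite size_map size_iota ltnn; move=> H; apply: notF; apply: H.
  apply/allP => x /mapP [k _ ->]; rewrite /root hornerM !lpolyE.
  by apply/negPn/negP => h; apply: hno; exists k.
rewrite map_inj_uniq ?iota_uniq //.
by move=> i j /eqP; rewrite eqr_nat => /eqP.
Qed.
End Line.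

Definition seqpt (T : Type) (m : nat) (z : 'I_m -> T) : seq T := [seq z i | i <- enum 'I_m].

Lemma size_seqpt T m (z : 'I_m -> T) : size (seqpt z) = m.
Proof. by rewrite size_map size_enum_ord. Qed.

Lemma nth_seqpt T m (z : 'I_m -> T) (i : 'I_m) x0 : nth x0 (seqpt z) i = z i.
Proof.
by rewrite (nth_map i) ?size_enum_ord ?ltn_ord // nth_ord_enum.
Qed.

Section Terms.
Variables (F : fieldType) (m : nat).

Fixpoint mp_of (t : GRing.term F) : {mpoly F[m]} :=
 match t with
 | GRing.Var i => if insub i is Some j then 'X_j else 0
 | GRing.Const c => c%:MP
 | GRing.NatConst n => n%:R
 | GRing.Add u v => mp_of u + mp_of v
 | GRing.Opp u => - mp_of u
 | GRing.NatMul u n => mp_of u *+ n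
 | GRing.Mul u v => mp_of u * mp_of v
 | GRing.Inv u => 0
 | GRing.Exp u n => mp_of u ^+ n
 end.

Lemma mp_ofE t (z : 'I_m -> F) : GRing.rterm t -> (mp_of t).@[z] = GRing.eval (seqpt z) t.
Proof.
elim: t => //=.
- move=> i _; case: insubP => [j _ <-|].
    by rewrite mevalXU nth_seqpt.
  by rewrite -leqNgt => h; rewrite meval0 nth_default // size_seqpt.
- by move=> c _; rewrite mevalC.
- by move=> n _; rewrite rmorph_nat.
- by move=> u IHu v IHv /andP[hu hv]; rewrite mevalD IHu ?IHv.
- by move=> u IHu hu; rewrite mevalN IHu.
- by move=> u IHu n hu; rewrite mevalMn IHu.
- by move=> u IHu v IHv /andP[hu hv]; rewrite mevalM IHu ?IHv.
- by move=> u IHu n hu; rewrite rmorphXn -IHu.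
Qed.

Definition tm_of (f : 'I_m -> nat) (p : {mpoly F[m]}) : GRing.term F :=
 \big[GRing.Add/GRing.Const 0]_(k <- msupp p)
    GRing.Mul (GRing.Const p@_k)
      (\big[GRing.Mul/GRing.Const 1]_(i < m) GRing.Exp (GRing.Var F (f i)) (k i)).

Lemma tm_ofE e f p : GRing.eval e (tm_of f p) = p.@[fun i => nth 0 e (f i)].
Proof.
rewrite mevalE /tm_of.
rewrite (big_morph (GRing.eval e) (id1 := 0) (op1 := +%R)) //.
apply: eq_bigr => k _ /=; congr (_ * _).
rewrite (big_morph (GRing.eval e) (id1 := 1) (op1 := *%R)) //.
Qed.
End Terms.

Section Good.
Variables (R : realType) (K : numFieldType) (iota : {rmorphism K -> R[i]}).
Hypothesis hiota : forall d : R[i], 0 < d ->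
  exists2 d' : K, 0 < d' & forall a : K, `|a| < d' -> `|iota a| < d.
Variable l : nat.

Definition ipt (y : 'I_l -> K) : 'I_l -> R[i] := fun i => iota (y i).

Definition box (y z : 'I_l -> K) (d : K) := forall i, `|z i - y i| < d.

Definition Good (Y : ('I_l -> K) -> Prop) :=
  exists H : {mpoly R[i][l]}, (exists y, H.@[ipt y] != 0) /\
    forall y, H.@[ipt y] != 0 -> exists2 d, 0 < d &
      forall z, box y z d -> (Y z <-> Y y).

Lemma box_le y z d d' : d <= d' -> box y z d -> box y z d'.
Proof. by move=> dd h i; exact: lt_le_trans (h i) dd. Qed.

Lemma H_nz_near (H : {mpoly R[i][l]}) y : H.@[ipt y] != 0 ->
  exists2 d, 0 < d & forall z, box y z d -> H.@[ipt z] != 0.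
Proof.
move=> /meval_nz_near [dC dC0 HC].
have [d d0 hd] := hiota dC0.
exists d => // z hz; apply: HC => i.
by rewrite /ipt -rmorphB hd.
Qed.

Lemma good_ext Y Y' : (forall z, Y z <-> Y' z) -> Good Y -> Good Y'.
Proof.
move=> e [H [ex HY]]; exists H; split => // y /HY [d d0 hd].
by exists d => // z /hd; rewrite !e.
Qed.

Lemma good_not Y : Good Y -> Good (fun z => ~ Y z).
Proof.
move=> [H [ex HY]]; exists H; split => // y /HY [d d0 hd].
by exists d => // z /hd ->.
Qed.

Lemma ipt_line y1 y2 (k : nat) :
  line (ipt y1) (ipt y2) k%:R = ipt (line y1 y2 k%:R).
Proof.
apply: functional_extensionality_dep => i.
by rewrite /line /ipt rmorphD rmorphM rmorphB rmorph_nat.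
Qed.

Lemma good_or Y1 Y2 : Good Y1 -> Good Y2 -> Good (fun z => Y1 z \/ Y2 z).
Proof.
move=> [H1 [[y1 h1] HY1]] [H2 [[y2 h2] HY2]]; exists (H1 * H2); split.
  have [k hk] := line_nz h1 h2.
  by exists (line y1 y2 k%:R); rewrite mevalM -ipt_line.
move=> y; rewrite mevalM mulf_eq0 negb_or => /andP[/HY1 [d1 d10 e1] /HY2 [d2 d20 e2]].
have [d [d0 dd1 dd2]] := pos_min d10 d20.
exists d => // z hz.
by rewrite (e1 z (box_le dd1 hz)) (e2 z (box_le dd2 hz)).
Qed.

Lemma good_and Y1 Y2 : Good Y1 -> Good Y2 -> Good (fun z => Y1 z /\ Y2 z).
Proof.
move=> g1 g2.
apply: (good_ext (Y := fun z => ~ ((~ Y1 z) \/ (~ Y2 z)))).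
  by move=> z; tauto.
by apply: good_not; apply: good_or; apply: good_not.
Qed.

Lemma good_const (P : Prop) : Good (fun _ => P).
Proof.
exists 1; split; first by exists (fun _ => 0); rewrite meval1 oner_eq0.
by move=> y _; exists 1 => //; rewrite ltr01.
Qed.

Lemma good_zero (H0 : {mpoly R[i][l]}) : Good (fun z => H0.@[ipt z] = 0).
Proof.
case: (classic (exists y, H0.@[ipt y] != 0)) => [ex|nex].
  exists H0; split => // y hy; have [d d0 hd] := H_nz_near hy.
  exists d => // z /hd hz; split => /eqP; by rewrite ?(negbTE hz) ?(negbTE hy).
apply: (good_ext (Y := fun _ => Logic.True)); last exact: good_const.
move=> z; split => // _; apply/eqP; apply: NNPP => h.
by apply: nex; exists z; apply/negP.
Qed.

Lemma good_dense Y : Good Y ->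
  zariski_dense (fun x => exists y, Y y /\ x = ipt y) ->
  exists y, Y y /\ exists2 d, 0 < d & forall z, box y z d -> Y z.
Proof.
move=> [H [[y0 h0] HY]] dense.
have [y [Yy Hy]] : exists y, Y y /\ H.@[ipt y] != 0.
  apply: NNPP => hno; move: h0; apply/negP/negPn/eqP.
  apply: (dense (ipt y0) (fun p => p = H)) => //.
  move=> p -> x [y [Yy ->]]; apply/eqP; apply: NNPP => h.
  by apply: hno; exists y; split => //; apply/negP.
have [d d0 hd] := HY _ Hy.
by exists y; split => //; exists d => // z /hd ->.
Qed.
End Good.

Section GoodQF.
Variables (R : realType) (K : numFieldType) (iota : {rmorphism K -> R[i]}).
Hypothesis hiota : forall d : R[i], 0 < d ->
  exists2 d' : K, 0 < d' & forall a : K, `|a| < d' -> `|iota a| < d.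
Variable l : nat.

Lemma good_qf (f : GRing.formula R[i]) : GRing.qf_form f -> GRing.rformula f ->
  Good iota (fun z : 'I_l -> K => GRing.qf_eval (seqpt (ipt iota z)) f).
Proof.
elim: f => //=.
- by move=> b _ _; apply: good_const.
- move=> t1 t2 _ /andP[r1 r2].
  apply: (good_ext (Y := fun z => (mp_of l t1 - mp_of l t2).@[ipt iota z] = 0)).
    move=> z; rewrite mevalB !mp_ofE //.
    by split => [h|/eqP ->]; [rewrite -subr_eq0 h|rewrite subrr].
  exact: (good_zero hiota).
- move=> f1 IH1 f2 IH2 /andP[q1 q2] /andP[r1 r2].
  apply: (good_ext (Y := fun z => GRing.qf_eval (seqpt (ipt iota z)) f1 /\
                                  GRing.qf_eval (seqpt (ipt iota z)) f2)).
    by move=> z; split => [[-> ->]|/andP].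
  by apply: good_and; [apply: IH1|apply: IH2].
- move=> f1 IH1 f2 IH2 /andP[q1 q2] /andP[r1 r2].
  apply: (good_ext (Y := fun z => GRing.qf_eval (seqpt (ipt iota z)) f1 \/
                                  GRing.qf_eval (seqpt (ipt iota z)) f2)).
    by move=> z; split => [[->|->]|/orP] //; rewrite orbT.
  by apply: good_or; [apply: IH1|apply: IH2].
- move=> f1 IH1 f2 IH2 /andP[q1 q2] /andP[r1 r2].
  apply: (good_ext (Y := fun z => ~ GRing.qf_eval (seqpt (ipt iota z)) f1 \/
                                  GRing.qf_eval (seqpt (ipt iota z)) f2)).
    move=> z; case: (GRing.qf_eval _ f1); case: (GRing.qf_eval _ f2) => /=;
    split => //; try by [left|right]; by case.
  by apply: good_or; [apply: good_not; apply: IH1|apply: IH2].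
- move=> f1 IH1 q1 r1.
  apply: (good_ext (Y := fun z => ~ GRing.qf_eval (seqpt (ipt iota z)) f1)).
    by move=> z; case: (GRing.qf_eval _ f1); split.
  by apply: good_not; apply: IH1.
Qed.
End GoodQF.

Section Real.
Variables (R : realType).
Local Notation iR := (real_complex R).

Lemma hiota_real (d : R[i]) : 0 < d ->
  exists2 d' : R, 0 < d' & forall a : R, `|a| < d' -> `|iR a| < d.
Proof.
case: d => a b; rewrite ltcE /= => /andP[/eqP b0 a0]; subst b.
exists a => // x hx.
rewrite normc_def ltcE /= eqxx /= expr0n /= addr0 sqrtr_sqr //.
Qed.

Variable l : nat.

Definition cx (P : {mpoly R[l]}) : {mpoly R[i][l]} :=
  \sum_(k <- msupp P) (iR P@_k) *: 'X_[k].

Lemma cxE P (y : 'I_l -> R) : (cx P).@[ipt iR y] = iR (P.@[y]).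
Proof.
rewrite [in RHS]mevalE rmorph_sum /cx raddf_sum /=; apply: eq_bigr => k _.
by rewrite mevalZ mevalX rmorphM rmorph_prod; congr (_ * _); apply: eq_bigr => i _; rewrite rmorphXn.
Qed.

Lemma sg_near (a b : R) : `|a - b| < `|b| -> Num.sg a = Num.sg b.
Proof.
rewrite ltr_norml => /andP[h1 h2].
case: (ltrgtP 0 b) => hb.
- rewrite gtr0_norm // in h1 h2.
  by rewrite !gtr0_sg //; lra.
- rewrite ltr0_norm // in h1 h2.
  by rewrite !ltr0_sg //; lra.
- by rewrite -hb normr0 in h1 h2; lra.
Qed.

Lemma good_sign (P : {mpoly R[l]}) (Y : ('I_l -> R) -> Prop) :
  (forall z z', Num.sg P.@[z] = Num.sg P.@[z'] -> (Y z <-> Y z')) ->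
  Good iR Y.
Proof.
move=> hY.
case: (classic (exists y, P.@[y] != 0)) => [[y0 h0]|nex].
  exists (cx P); split; first by exists y0; rewrite cxE fmorph_eq0.
  move=> y; rewrite cxE fmorph_eq0 => hy.
  have := normr_gt0 (P.@[y]); rewrite hy => /(cont_meval P y) [d d0 hd].
  by exists d => // z /hd /sg_near; apply: hY.
have h0 : forall z, P.@[z] = 0.
  by move=> z; apply/eqP; apply: NNPP => h; apply: nex; exists z; apply/negP.
apply: (good_ext (Y := fun _ => Y (fun _ => 0))); last exact: good_const.
by move=> z; apply: hY; rewrite !h0.
Qed.

Lemma good_sa (S : ('I_l -> R) -> Prop) : semialgebraic S -> Good iR S.
Proof.
elim => {S}.
- move=> p; apply: (good_sign (P := p)) => z z' e.
  by rewrite -!sgr_cp0 e.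
- by move=> S T _ gS _ gT; apply: good_or.
- by move=> S _ gS; apply: good_not.
- by move=> S T e _ gS; apply: good_ext gS.
Qed.

Lemma good_oqf (f : ord.formula R) : ord.qf_form f -> ord.rformula f ->
  Good iR (fun z : 'I_l -> R => ord.qf_eval (seqpt z) f).
Proof.
elim: f => //=.
- by move=> b _ _; apply: good_const.
- move=> t1 t2 _ /andP[r1 r2].
  apply: (good_sign (P := mp_of l t2 - mp_of l t1)) => z z'.
  rewrite !mevalB !mp_ofE // => e.
  by rewrite eq_sym -subr_eq0 -sgr_eq0 e sgr_eq0 subr_eq0 eq_sym.
- move=> t1 t2 _ /andP[r1 r2].
  apply: (good_sign (P := mp_of l t2 - mp_of l t1)) => z z'.
  rewrite !mevalB !mp_ofE // => e.
  by rewrite -subr_gt0 -sgr_cp0 e sgr_cp0 subr_gt0.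
- move=> t1 t2 _ /andP[r1 r2].
  apply: (good_sign (P := mp_of l t2 - mp_of l t1)) => z z'.
  rewrite !mevalB !mp_ofE // => e.
  rewrite -subr_ge0 -[X in _ <-> is_true X]subr_ge0 !real_leNgt ?rpred0 ?num_real //.
  by rewrite -!sgr_cp0 e.
- move=> f1 IH1 f2 IH2 /andP[q1 q2] /andP[r1 r2].
  apply: (good_ext (Y := fun z => ord.qf_eval (seqpt z) f1 /\ ord.qf_eval (seqpt z) f2)).
    move=> z; case: (ord.qf_eval _ f1); case: (ord.qf_eval _ f2);
    split => //; try by case.
  by apply: good_and; [apply: IH1|apply: IH2].
- move=> f1 IH1 f2 IH2 /andP[q1 q2] /andP[r1 r2].
  apply: (good_ext (Y := fun z => ord.qf_eval (seqpt z) f1 \/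
                                  ord.qf_eval (seqpt z) f2)).
    by move=> z; split => [[->|->]|/orP] //; rewrite orbT.
  by apply: good_or; [apply: IH1|apply: IH2].
- move=> f1 IH1 f2 IH2 /andP[q1 q2] /andP[r1 r2].
  apply: (good_ext (Y := fun z => ~ ord.qf_eval (seqpt z) f1 \/
                                  ord.qf_eval (seqpt z) f2)).
    move=> z; case: (ord.qf_eval _ f1); case: (ord.qf_eval _ f2) => /=;
    split => //; try by [left|right]; by case.
  by apply: good_or; [apply: good_not; apply: IH1|apply: IH2].
- move=> f1 IH1 q1 r1.
  apply: (good_ext (Y := fun z => ~ ord.qf_eval (seqpt z) f1)).
    by move=> z; case: (ord.qf_eval _ f1); split.
  by apply: good_not; apply: IH1.
Qed.
End Real.

Section Eball.
Variable R : realType.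
Local Notation nc := (@ComplexField.Normc.normc R).
Local Notation iR := (real_complex R).

Lemma normC_nc (z : R[i]) : `|z| = iR (nc z).
Proof. reflexivity. Qed.

Lemma nc_ge0 (z : R[i]) : 0 <= nc z.
Proof. by case: z => a b; rewrite /= sqrtr_ge0. Qed.

Lemma nc_real (a : R) : nc (iR a) = `|a|.
Proof. by rewrite /= expr0n /= addr0 sqrtr_sqr. Qed.

Lemma nc_tri (a b c : R[i]) : nc (a - c) <= nc (a - b) + nc (b - c).
Proof.
have -> : a - c = (a - b) + (b - c) by rewrite addrA subrK.
exact: le_normcD.
Qed.

Lemma nc0 : nc 0 = 0.
Proof. exact: ComplexField.Normc.normc0. Qed.

Variable m : nat.

Lemma eballE (c x : 'I_m -> R[i]) (r : R) :
  eball c r x <-> \sum_i nc (x i - c i) ^+ 2 < r ^+ 2.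
Proof.
rewrite /eball.
have -> : \sum_(i < m) `|x i - c i| ^+ 2 = iR (\sum_i nc (x i - c i) ^+ 2).
  by rewrite rmorph_sum; apply: eq_bigr => i _; rewrite rmorphXn.
by rewrite ltcR.
Qed.

Lemma eball_coord (c x : 'I_m -> R[i]) (r : R) (i : 'I_m) :
  eball c r x -> 0 < r -> nc (x i - c i) < r.
Proof.
move=> /eballE h r0.
have : nc (x i - c i) ^+ 2 < r ^+ 2.
  apply: le_lt_trans h.
  rewrite (bigD1 i) //= lerDl sumr_ge0 // => j _.
  by rewrite exprn_ge0 ?nc_ge0.
by rewrite ltr_pXn2r // ?nc_ge0 ?ltW // qualifE /= ?nc_ge0 ?ltW.
Qed.

Lemma eball_center (c : 'I_m -> R[i]) (r : R) : 0 < r -> eball c r c.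
Proof.
move=> r0; apply/eballE.
rewrite big1 ?exprn_gt0 // => i _.
by rewrite subrr nc0 expr0n.
Qed.

Lemma eopen_eball (c : 'I_m -> R[i]) (r : R) : eopen (eball c r).
Proof.
move=> x /eballE hx.
set s := \sum_i nc (x i - c i) ^+ 2 in hx.
set M := \sum_(i < m) (2 * nc (x i - c i) + 1).
have M0 : 0 <= M by rewrite sumr_ge0 // => i _; have := nc_ge0 (x i - c i); lra.
set rho := Num.min 1 ((r ^+ 2 - s) / (M + 1)).
have q0 : 0 < (r ^+ 2 - s) / (M + 1) by rewrite divr_gt0 //; lra.
have rho0 : 0 < rho by rewrite lt_min ltr01 q0.
have rho1 : rho <= 1 by rewrite ge_min lexx.
have rhoq : rho <= (r ^+ 2 - s) / (M + 1) by rewrite ge_min lexx orbT.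
exists rho; split => // y hy.
apply/eballE.
apply: (@le_lt_trans _ _ (s + rho * M)).
  rewrite /s /M mulr_sumr -big_split /=; apply: ler_sum => i _.
  have h1 := eball_coord i hy rho0.
  have h2 := nc_tri (y i) (x i) (c i).
  have h3 := nc_ge0 (y i - c i).
  have h4 := nc_ge0 (x i - c i).
  have h5 := nc_ge0 (y i - x i).
  nra.
have : rho * M <= (r ^+ 2 - s) / (M + 1) * M by rewrite ler_wpM2r.
have : (r ^+ 2 - s) / (M + 1) * M < r ^+ 2 - s.
  rewrite mulrAC ltr_pdivrMr; last lra.
  by rewrite ltr_pM2l; lra.
lra.
Qed.
End Eball.

Section Final.
Variable R : realType.
Local Notation nc := (@ComplexField.Normc.normc R).
Local Notation iR := (real_complex R).
Variable l : nat.

Lemma easy_dir (A D : ('I_l -> R[i]) -> Prop) :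
  locally_zariski_dense A -> nonempty_interior_in A D -> zariski_dense D.
Proof.
move=> lzd [c [r [r0 [[x0 [b0 a0]] sub]]]].
have := lzd (eball c r) (@eopen_eball R l c r) (ex_intro _ x0 (conj b0 a0)).
move=> dense x S hS p Sp.
apply: (dense x S) => // q Sq y [hb ay].
exact: hS q Sq y (sub y hb ay).
Qed.

Lemma hiota_id (d : R[i]) : 0 < d ->
  exists2 d' : R[i], 0 < d' & forall a : R[i], `|a| < d' -> `|(idfun : {rmorphism R[i] -> R[i]}) a| < d.
Proof. by move=> d0; exists d. Qed.

Lemma dense_ext (X X' : ('I_l -> R[i]) -> Prop) :
  (forall x, X x <-> X' x) -> zariski_dense X -> zariski_dense X'.
Proof.
move=> e dX x S hS p Sp; apply: (dX x S) => // q Sq y /e; exact: hS.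
Qed.

Lemma hard_cplx (A D : ('I_l -> R[i]) -> Prop) :
  (forall x, D x -> A x) -> Good (idfun : {rmorphism R[i] -> R[i]}) D ->
  zariski_dense D -> nonempty_interior_in A D.
Proof.
move=> DA gD dense.
have dX : zariski_dense (fun x => exists y, D y /\ x = ipt (idfun : {rmorphism R[i] -> R[i]}) y).
  apply: dense_ext dense => x; split => [Dx|[y [Dy ->]]]; first by exists x.
  exact: Dy.
have [y [Dy [d d0 hd]]] := good_dense gD dX.
move: d0; rewrite ltcE /= => /andP[/eqP dI dR].
exists y, (complex.Re d); split => //; split.
  by exists y; split => //; [apply: eball_center | apply: DA].
move=> x hx _; apply: hd => i.
rewrite normC_nc; move: hx; case: d dI dR => a b /= -> dR hx.
by rewrite ltcR; apply: eball_coord.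
Qed.

Lemma hard_real (A D : ('I_l -> R[i]) -> Prop) :
  (forall x, D x -> A x) -> (forall x, A x -> exists y, x = realpt y) ->
  Good iR (fun y => D (realpt y)) ->
  zariski_dense D -> nonempty_interior_in A D.
Proof.
move=> DA Areal gD dense.
have dX : zariski_dense (fun x => exists y, D (realpt y) /\ x = ipt iR y).
  apply: dense_ext dense => x; split => [Dx|[y [Dy ->]]] //.
  have [y' ey'] := Areal x (DA x Dx); subst x.
  by exists y'.
have [y [Dy [d d0 hd]]] := good_dense gD dX.
exists (realpt y), d; split => //; split.
  by exists (realpt y); split => //; [apply: eball_center | apply: DA].
move=> x hx ax; have [y' ey'] := Areal x ax; subst x.
apply: hd => i; have := eball_coord i hx d0.
by rewrite /realpt -rmorphB nc_real.
Qed.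
End Final.

Lemma set_nth_end (T : Type) (x0 : T) (e : seq T) x : set_nth x0 e (size e) x = e ++ [:: x].
Proof. by elim: e => //= a e ->. Qed.

Lemma nth_cat_off (T : Type) (x0 : T) (e w : seq T) k (i : nat) :
  size e = k -> nth x0 (e ++ w) (k + i) = nth x0 w i.
Proof. by move=> <-; rewrite nth_cat ltnNge leq_addr /= addKn. Qed.

Section CplxForm.
Variable R : realType.
Local Notation C := (R[i]).

Lemma joinpt_nth l n (a : 'I_l -> R[i]) (w : seq R[i]) :
  forall i, joinpt a (fun j : 'I_n => nth 0 w j) i = nth 0 (seqpt a ++ w) i.
Proof.
move=> i; rewrite /joinpt; case: splitP => j ->.
  by rewrite nth_cat size_seqpt ltn_ord nth_seqpt.
by rewrite nth_cat_off ?size_seqpt.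
Qed.


Fixpoint exsG (k n : nat) (f : GRing.formula C) :=
  if n is n'.+1 then GRing.Exists k (exsG k.+1 n' f) else f.

Lemma holds_exsG n : forall e k f, size e = k ->
  (GRing.holds e (exsG k n f) <-> exists w, size w = n /\ GRing.holds (e ++ w) f).
Proof.
elim: n => [|n IH] e k f se /=.
  split => [h|[w [/size0nil -> h]]]; last by rewrite cats0 in h.
  by exists [::]; rewrite cats0.
split.
  move=> [x]; rewrite -se set_nth_end IH ?size_cat ?se ?addn1 //.
  by move=> [w [sw h]]; exists (x :: w); split; [rewrite /= sw | rewrite -catA in h].
move=> [[|x w] [//= [sw] h]]; exists x.
by rewrite -se set_nth_end IH ?size_cat ?se ?addn1 //; exists w; rewrite -catA.
Qed.

Definition fallG (T : Type) (s : seq T) (F : T -> GRing.formula C) :=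
  foldr (fun x f => GRing.And (F x) f) (GRing.Bool true) s.

Lemma holds_fallG (T : eqType) e (s : seq T) F :
  GRing.holds e (fallG s F) <-> forall x, x \in s -> GRing.holds e (F x).
Proof.
elim: s => [|x s IH] /=; first by split.
rewrite IH; split => [[h1 h2] y|h]; last first.
  by split; [apply: h; rewrite mem_head | move=> y ys; apply: h; rewrite in_cons ys orbT].
by rewrite in_cons => /orP[/eqP ->|]; [|apply: h2].
Qed.

Lemma cons_form (m k : nat) (X : ('I_m -> C) -> Prop) : constructible X ->
  exists f : GRing.formula C, forall e, X (fun i => nth 0 e (k + i)) <-> GRing.holds e f.
Proof.
elim => {X}.
- move=> p; exists (GRing.Equal (tm_of (fun i : 'I_m => k + i) p) (GRing.Const 0)).
  by move=> e /=; rewrite tm_ofE.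
- move=> S T _ [f1 h1] _ [f2 h2]; exists (GRing.Or f1 f2) => e /=.
  by rewrite h1 h2.
- move=> S _ [f1 h1]; exists (GRing.Not f1) => e /=.
  by rewrite h1.
- move=> S T e _ [f1 h1]; exists f1 => e'.
  by rewrite -h1 e.
Qed.

Variables (l n s : nat) (g : 'I_s -> laurent R l n).

Lemma leval0 j a (x : 'I_n -> C) : in_torus x ->
  (leval (g j) a x = 0 <-> (lnum (g j)).@[joinpt a x] = 0).
Proof.
move=> tx; rewrite /leval.
have d0 : \prod_(i < n) x i ^+ lden (g j) i != 0.
  apply: (big_ind (fun y => y != 0)); first exact: oner_neq0.
    by move=> u v hu hv; rewrite mulf_neq0.
  by move=> i _; rewrite expf_neq0 ?tx.
split => [/eqP|->]; last by rewrite mul0r.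
by rewrite mulf_eq0 invr_eq0 (negbTE d0) orbF => /eqP.
Qed.

Lemma E_form (X : ('I_n -> C) -> Prop) : constructible X ->
  exists f : GRing.formula C, forall a : 'I_l -> C,
    (exists x, torus_zeros g a x /\ X x) <-> GRing.holds (seqpt a) f.
Proof.
move=> /(cons_form l) [fX hX].
pose ftor := fallG (enum 'I_n) (fun i => GRing.Not (GRing.Equal (GRing.Var _ (l + i)) (GRing.Const 0))).
pose fg := fallG (enum 'I_s) (fun j => GRing.Equal
   (tm_of (fun i : 'I_(l + n) => nat_of_ord i) (lnum (g j))) (GRing.Const 0)).
exists (exsG l n (GRing.And fX (GRing.And ftor fg))) => a.
rewrite holds_exsG ?size_seqpt //.
have key : forall w, size w = n ->
  (GRing.holds (seqpt a ++ w) (GRing.And fX (GRing.And ftor fg)) <->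
   let x := fun i : 'I_n => nth 0 w i in torus_zeros g a x /\ X x).
  move=> w sw /=; rewrite -hX.
  have -> : (fun i : 'I_n => nth 0 (seqpt a ++ w) (l + i)) = (fun i => nth 0 w i).
    by apply: functional_extensionality_dep => i; rewrite nth_cat_off ?size_seqpt.
  rewrite /ftor /fg !holds_fallG /torus_zeros /in_torus.
  have tor : (forall x, x \in enum 'I_n -> GRing.holds (seqpt a ++ w)
        (GRing.Not (GRing.Equal (GRing.Var _ (l + x)) (GRing.Const 0)))) <->
      (forall i : 'I_n, nth 0 w i != 0).
    split => h i; first by have /= := h i (mem_enum _ i); rewrite nth_cat_off ?size_seqpt // => /eqP.
    by move=> _ /=; rewrite nth_cat_off ?size_seqpt //; apply/eqP.
  rewrite tor.
  have jp : joinpt a (fun i : 'I_n => nth 0 w i) = (fun i => nth 0 (seqpt a ++ w) i).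
    by apply: functional_extensionality_dep => i; exact: joinpt_nth.
  split => [[xX [t e]]|[[t e] xX]]; do 2?split => //.
    move=> j; rewrite leval0 //.
    by have := e j (mem_enum _ j); rewrite /= tm_ofE jp.
  move=> j _; rewrite /= tm_ofE.
  by have := e j; rewrite leval0 // jp.
split.
  move=> [x [tz xX]]; exists (seqpt x); split; first exact: size_seqpt.
  apply/key; first exact: size_seqpt.
  have -> : (fun i : 'I_n => nth 0 (seqpt x) i) = x.
    by apply: functional_extensionality_dep => i; rewrite nth_seqpt.
  by [].
by move=> [w [sw /key]] /(_ sw) h; exists (fun i : 'I_n => nth 0 w i).
Qed.
End CplxForm.

Section QE.
Variable R : realType.

Lemma cqe (f : GRing.formula R[i]) : exists f',
  GRing.qf_form f' && GRing.rformula f' /\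
  forall e, GRing.holds e f <-> GRing.qf_eval e f'.
Proof.
exists (GRing.quantifier_elim (@ClosedFieldQE.ex_elim R[i]) (GRing.to_rform f)).
split; first exact: (GRing.quantifier_elim_wf (@ClosedFieldQE.wf_ex_elim _) (GRing.to_rform_rformula f)).
move=> e; rewrite -GRing.to_rformP.
apply: rwP; apply: GRing.quantifier_elim_rformP.
- exact: ClosedFieldQE.wf_ex_elim.
- exact: (ClosedFieldQE.holds_ex_elim (@complex_acf_axiom R)).
- exact: GRing.to_rform_rformula.
Qed.

Lemma rqe (f : ord.formula R) : exists f',
  ord.qf_form f' && ord.rformula f' /\
  forall e, ord.holds e f <-> ord.qf_eval e f'.
Proof.
exists (ord.quantifier_elim (@wproj R) (ord.to_rform f)).
split; first exact: (ord.quantifier_elim_wf (@wf_QE_wproj R) (ord.to_rform_rformula f)).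
move=> e; rewrite -ord.to_rformP.
apply: rwP; apply: ord.quantifier_elim_rformP.
- exact: wf_QE_wproj.
- exact: valid_QE_wproj.
- exact: ord.to_rform_rformula.
Qed.
End QE.

Section RealForm.
Variable R : realType.
Local Notation C := (R[i]).
Local Notation iR := (real_complex R).

Fixpoint exsO (k n : nat) (f : ord.formula R) :=
  if n is n'.+1 then ord.Exists k (exsO k.+1 n' f) else f.

Lemma holds_exsO n : forall e k f, size e = k ->
  (ord.holds e (exsO k n f) <-> exists w, size w = n /\ ord.holds (e ++ w) f).
Proof.
elim: n => [|n IH] e k f se /=.
  split => [h|[w [/size0nil -> h]]]; last by rewrite cats0 in h.
  by exists [::]; rewrite cats0.
split.
  move=> [x]; rewrite -se set_nth_end IH ?size_cat ?se ?addn1 //.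
  by move=> [w [sw h]]; exists (x :: w); split; [rewrite /= sw | rewrite -catA in h].
move=> [[|x w] [//= [sw] h]]; exists x.
by rewrite -se set_nth_end IH ?size_cat ?se ?addn1 //; exists w; rewrite -catA.
Qed.

Definition fallO (T : Type) (s : seq T) (F : T -> ord.formula R) :=
  foldr (fun x f => ord.And (F x) f) (ord.Bool true) s.

Lemma holds_fallO (T : eqType) e (s : seq T) F :
  ord.holds e (fallO s F) <-> forall x, x \in s -> ord.holds e (F x).
Proof.
elim: s => [|x s IH] /=; first by split.
rewrite IH; split => [[h1 h2] y|h]; last first.
  by split; [apply: h; rewrite mem_head | move=> y ys; apply: h; rewrite in_cons ys orbT].
by rewrite in_cons => /orP[/eqP ->|]; [|apply: h2].
Qed.

Lemma sa_form (m k : nat) (S : ('I_m -> R) -> Prop) : semialgebraic S ->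
  exists f : ord.formula R, forall e, S (fun i => nth 0 e (k + i)) <-> ord.holds e f.
Proof.
elim => {S}.
- move=> p; exists (ord.Lt (GRing.Const 0) (tm_of (fun i : 'I_m => k + i) p)).
  by move=> e /=; rewrite tm_ofE.
- move=> S T _ [f1 h1] _ [f2 h2]; exists (ord.Or f1 f2) => e /=.
  by rewrite h1 h2.
- move=> S _ [f1 h1]; exists (ord.Not f1) => e /=.
  by rewrite h1.
- move=> S T e _ [f1 h1]; exists f1 => e'.
  by rewrite -h1 e.
Qed.

Variable m : nat.

Definition reP (P : {mpoly C[m]}) : {mpoly R[m]} :=
  \sum_(k <- msupp P) (complex.Re P@_k) *: 'X_[k].
Definition imP (P : {mpoly C[m]}) : {mpoly R[m]} :=
  \sum_(k <- msupp P) (complex.Im P@_k) *: 'X_[k].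

Lemma Re_add : {morph (@complex.Re R) : x y / x + y}.
Proof. by move=> [a b] [c d]. Qed.
Lemma Im_add : {morph (@complex.Im R) : x y / x + y}.
Proof. by move=> [a b] [c d]. Qed.

Lemma realpt_meval (P : {mpoly C[m]}) (v : 'I_m -> R) :
  P.@[realpt v] = \sum_(k <- msupp P) P@_k * iR (\prod_i v i ^+ k i).
Proof.
rewrite mevalE; apply: eq_bigr => k _; congr (_ * _).
by rewrite rmorph_prod; apply: eq_bigr => i _; rewrite rmorphXn.
Qed.

Lemma reP_eval P v : (reP P).@[v] = complex.Re (P.@[realpt v]).
Proof.
rewrite realpt_meval (big_morph _ Re_add (erefl : complex.Re (0 : C) = 0)).
rewrite /reP raddf_sum; apply: eq_bigr => k _ /=.
rewrite mevalZ mevalX; case: (P@_k) => a b /=.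
by rewrite mulr0 subr0.
Qed.

Lemma imP_eval P v : (imP P).@[v] = complex.Im (P.@[realpt v]).
Proof.
rewrite realpt_meval (big_morph _ Im_add (erefl : complex.Im (0 : C) = 0)).
rewrite /imP raddf_sum; apply: eq_bigr => k _ /=.
rewrite mevalZ mevalX; case: (P@_k) => a b /=.
by rewrite mulr0 add0r.
Qed.

Lemma complex_eq0 (c : C) : c = 0 <-> complex.Re c = 0 /\ complex.Im c = 0.
Proof. by case: c => a b /=; split => [[-> ->]|[-> ->]]. Qed.
End RealForm.

Section RealE.
Variable R : realType.
Local Notation C := (R[i]).
Local Notation iR := (real_complex R).
Variables (l n s : nat) (g : 'I_s -> laurent R l n).

Lemma joinpt_real (y : 'I_l -> R) (w : seq R) :
  joinpt (realpt y) (realpt (fun j : 'I_n => nth 0 w j)) =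
  realpt (fun i : 'I_(l + n) => nth 0 (seqpt y ++ w) i).
Proof.
apply: functional_extensionality_dep => i; rewrite /joinpt /realpt.
case: splitP => j ->.
  by rewrite nth_cat size_seqpt ltn_ord nth_seqpt.
by rewrite nth_cat_off ?size_seqpt.
Qed.

Lemma E_form_real (X : ('I_n -> C) -> Prop) : real_semialgebraic X ->
  exists f : ord.formula R, forall y : 'I_l -> R,
    (exists x, torus_zeros g (realpt y) x /\ X x) <-> ord.holds (seqpt y) f.
Proof.
move=> [S [saS hX]].
have [fS hS] := sa_form l saS.
pose ftor := fallO (R := R) (enum 'I_n) (fun i => ord.Not (ord.Equal (GRing.Var _ (l + i)) (GRing.Const 0))).
pose fg := fallO (enum 'I_s) (fun j => ord.And
   (ord.Equal (tm_of (fun i : 'I_(l + n) => nat_of_ord i) (reP (lnum (g j)))) (GRing.Const 0))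
   (ord.Equal (tm_of (fun i : 'I_(l + n) => nat_of_ord i) (imP (lnum (g j)))) (GRing.Const 0))).
exists (exsO l n (ord.And fS (ord.And ftor fg))) => y.
rewrite holds_exsO ?size_seqpt //.
have key : forall w, size w = n ->
  (ord.holds (seqpt y ++ w) (ord.And fS (ord.And ftor fg)) <->
   let x := fun i : 'I_n => nth 0 w i in torus_zeros g (realpt y) (realpt x) /\ S x).
  move=> w sw /=; rewrite -hS.
  have -> : (fun i : 'I_n => nth 0 (seqpt y ++ w) (l + i)) = (fun i => nth 0 w i).
    by apply: functional_extensionality_dep => i; rewrite nth_cat_off ?size_seqpt.
  rewrite /ftor /fg !holds_fallO /torus_zeros /in_torus.
  have tor : (forall x, x \in enum 'I_n -> ord.holds (seqpt y ++ w)
        (ord.Not (ord.Equal (GRing.Var _ (l + x)) (GRing.Const 0)))) <->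
      (forall i : 'I_n, realpt (fun j : 'I_n => nth 0 w j) i != 0).
    split => h i.
      have /= := h i (mem_enum _ i); rewrite nth_cat_off ?size_seqpt // => h'.
      by rewrite /realpt fmorph_eq0; apply/eqP.
    move=> _ /=; rewrite nth_cat_off ?size_seqpt //; apply/eqP.
    by have := h i; rewrite /realpt fmorph_eq0.
  rewrite tor.
  have eqs : forall j, (ord.holds (seqpt y ++ w) (ord.And
   (ord.Equal (tm_of (fun i : 'I_(l + n) => nat_of_ord i) (reP (lnum (g j)))) (GRing.Const 0))
   (ord.Equal (tm_of (fun i : 'I_(l + n) => nat_of_ord i) (imP (lnum (g j)))) (GRing.Const 0))))
     <-> (lnum (g j)).@[joinpt (realpt y) (realpt (fun j : 'I_n => nth 0 w j))] = 0.
    move=> j /=; rewrite !tm_ofE joinpt_real complex_eq0 -reP_eval -imP_eval.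
    by [].
  split => [[xS [t e]]|[[t e] xS]]; do 2?split => //.
    by move=> j; rewrite leval0 // -eqs; apply: e; rewrite mem_enum.
  by move=> j _; rewrite eqs -leval0.
split.
  move=> [x [tz xX]]; have [y' [Sy' ex]] := (hX x).1 xX; subst x.
  exists (seqpt y'); split; first exact: size_seqpt.
  apply/key; first exact: size_seqpt.
  have -> : (fun i : 'I_n => nth 0 (seqpt y') i) = y'.
    by apply: functional_extensionality_dep => i; rewrite nth_seqpt.
  by [].
move=> [w [sw /key]] /(_ sw) [tz Sw].
exists (realpt (fun i : 'I_n => nth 0 w i)); split => //.
by apply/hX; exists (fun i : 'I_n => nth 0 w i).
Qed.
End RealE.

Section Main.
Variable R : realType.
Local Notation C := (R[i]).
Local Notation iR := (real_complex R).
Local Notation iC := (idfun : {rmorphism R[i] -> R[i]}).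

Lemma good_cons l (A : ('I_l -> C) -> Prop) : constructible A -> Good iC A.
Proof.
elim => {A}.
- by move=> p; apply: (good_zero (@hiota_id R) p).
- by move=> S T _ gS _ gT; apply: good_or.
- by move=> S _ gS; apply: good_not.
- by move=> S T e _ gS; apply: good_ext gS.
Qed.

Variables (l n s : nat) (g : 'I_s -> laurent R l n).

Lemma good_E (K : numFieldType) (iota : {rmorphism K -> R[i]})
  (hiota : forall d : R[i], 0 < d ->
     exists2 d' : K, 0 < d' & forall a : K, `|a| < d' -> `|iota a| < d)
  (X : ('I_n -> C) -> Prop) : constructible X ->
  Good iota (fun z : 'I_l -> K => exists x, torus_zeros g (ipt iota z) x /\ X x).
Proof.
move=> /(E_form g) [f hf]; have [f' [qf hf']] := cqe f.
apply: (good_ext (Y := fun z => GRing.qf_eval (seqpt (ipt iota z)) f')).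
  by move=> z; rewrite hf hf'.
by case/andP: qf => q r; apply: good_qf.
Qed.

Theorem main (A : ('I_l -> C) -> Prop) (X : ('I_n -> C) -> Prop) :
  (   (real_semialgebraic A /\ real_torus_semialgebraic X)
   \/ (constructible A /\ torus_constructible X)
   \/ (real_semialgebraic A /\ torus_constructible X)) ->
  locally_zariski_dense A ->
  (zariski_dense (discr_set g A X) <->
   nonempty_interior_in A (discr_set g A X)).
Proof.
move=> hyp lzd; split; last exact: easy_dir.
have DA : forall x, discr_set g A X x -> A x by move=> x [].
case: hyp => [[[S [saS hA]] [hX _]]|[[cA [cX _]]|[[S [saS hA]] [cX _]]]].
- apply: hard_real => //.
    by move=> x /hA [y [_ ->]]; exists y.
  have [f hf] := E_form_real g hX.
  have [f' [qf hf']] := rqe f.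
  apply: (good_ext (Y := fun y => S y /\ ord.qf_eval (seqpt y) f')).
    move=> y; rewrite /discr_set -hf' -hf hA; split => [[Sy h]|[[y0 [Sy0 e]] h]].
      by split => //; exists y.
    split => //; suff -> : y = y0 by [].
    apply: functional_extensionality_dep => i.
    by have := congr1 (fun v => v i) e; apply: complexI.
  case/andP: qf => q r.
  by apply: good_and; [apply: good_sa | apply: good_oqf].
- apply: hard_cplx => //.
  apply: (good_and (good_cons cA) (good_E (@hiota_id R) cX)).
- apply: hard_real => //.
    by move=> x /hA [y [_ ->]]; exists y.
  apply: (good_ext (Y := fun y => S y /\ exists x, torus_zeros g (ipt iR y) x /\ X x)).
    move=> y; rewrite /discr_set hA; split => [[Sy h]|[[y0 [Sy0 e]] h]].
      by split => //; exists y.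
    split => //; suff -> : y = y0 by [].
    apply: functional_extensionality_dep => i.
    by have := congr1 (fun v => v i) e; apply: complexI.
  by apply: good_and; [apply: good_sa | apply: good_E => //; apply: hiota_real].
Qed.
End Main.

Theorem mainTheorem5 (R : realType) (l n s : nat)
  (g : 'I_s -> laurent R l n)
  (A : ('I_l -> R[i]) -> Prop) (X : ('I_n -> R[i]) -> Prop) :
  (   (real_semialgebraic A /\ real_torus_semialgebraic X)
   \/ (constructible A /\ torus_constructible X)
   \/ (real_semialgebraic A /\ torus_constructible X)) ->
  locally_zariski_dense A ->
  (zariski_dense (discr_set g A X) <->
   nonempty_interior_in A (discr_set g A X)).
Proof. exact: main. Qed.
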